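(* A binary relation (i.e. a structure $(X,\rho)$ with $\rho\subseteq X\times X$) is unary FA-presentable if and only if it is isomorphic to a binary relation obtained by propagating a unary FA-foundational binary relation.
   Context: A structure is unary FA-presentable if there exist a regular language $L\subseteq a^*$ over a one-letter alphabet and a surjection $\phi:L\to X$ such that, for each of the relations equality and $\rho$, the set of pairs $(u,v)\in L^2$ with $u\phi,v\phi$ related is a regular relation, i.e. $\{\mathrm{conv}(u,v)\}$ is a regular language, where $\mathrm{conv}(u,v)$ is the word over $\{a,\$\}^2$ reading $u,v$ in parallel with the shorter word padded by $\$$. A unary FA-foundational binary relation is a finite set $Q$ with a relation $\rho\subseteq Q\times Q$ and pairwise disjoint subsets $P_0,\dots,P_{n-1}$ ($n\ge 0$) called seeds, each $P_k=\{p^{(k)}_1,\dots,p^{(k)}_5\}$ with five distinct elements, such that, writing $Q'=Q\setminus(P_0\cup\dots\cup P_{n-1})$, for all $k,l\in\{0,\dots,n-1\}$ (possibly $k=l$) and all $q\in Q'$: (1) the statements $p^{(k)}_i\,\rho\,p^{(l)}_i$ for $i=1,\dots,5$ are all true or all false; (2) the statements $p^{(k)}_i\,\rho\,p^{(l)}_{i+1}$ for $i=1,\dots,4$ are all true or all false; (3) the statements $p^{(k)}_{i+1}\,\rho\,p^{(l)}_{i}$ for $i=1,\dots,4$ are all true or all false; (4) the statements $p^{(k)}_i\,\rho\,p^{(l)}_j$ for all $1\le i,j\le 5$ with $j-i\ge 2$ are all true or all false; (5) the statements $p^{(k)}_j\,\rho\,p^{(l)}_i$ for all $1\le i,j\le5$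 with $j-i\ge 2$ are all true or all false; (6) the statements $q\,\rho\,p^{(k)}_i$ for $i=2,\dots,5$ are all true or all false; (7) the statements $p^{(k)}_i\,\rho\,q$ for $i=2,\dots,5$ are all true or all false. Propagating it yields the structure $(\hat Q,\hat\rho)$ where $\hat Q=Q'\cup\{p^{(k)}_i: 0\le k\le n-1,\ i\in\mathbb{N}=\{1,2,\dots\}\}$ (new distinct elements $p^{(k)}_i$ for $i\ge 6$), and $\hat\rho$ is defined by: for $p,q\in Q'$, $p\,\hat\rho\, q$ iff $p\,\rho\, q$; for $i,j\in\mathbb{N}$, $p^{(k)}_i\,\hat\rho\,p^{(l)}_j$ iff [$j=i$ and $p^{(k)}_1\rho p^{(l)}_1$] or [$j=i+1$ and $p^{(k)}_1\rho p^{(l)}_2$] or [$j=i-1$ and $p^{(k)}_2\rho p^{(l)}_1$] or [$j\ge i+2$ and $p^{(k)}_1\rho p^{(l)}_3$] or [$j\le i-2$ and $p^{(k)}_3\rho p^{(l)}_1$]; for $q\in Q'$: $q\,\hat\rho\,p^{(k)}_1$ iff $q\rho p^{(k)}_1$, and for $i\ge2$, $q\,\hat\rho\,p^{(k)}_i$ iff $q\rho p^{(k)}_2$; $p^{(k)}_1\,\hat\rho\,q$ iff $p^{(k)}_1\rho q$, and for $i\ge 2$, $p^{(k)}_i\,\hat\rho\,q$ iff $p^{(k)}_2\rho q$. (Then $\hat\rho$ restricted to $Q$ equals $\rho$.) *)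

(* Defs.v *)
From mathcomp Require Import all_boot.
Set Implicit Arguments. Unset Strict Implicit. Unset Printing Implicit Defensive.

Record dfa (A : Type) := DFA {
  dstate : finType;
  dstart : dstate;
  dfinal : pred dstate;
  dtrans : dstate -> A -> dstate }.

Definition daccept (A : Type) (D : dfa A) (w : seq A) : bool :=
  @dfinal A D (foldl (@dtrans A D) (@dstart A D) w).

Definition regular_lang (A : Type) (K : seq A -> Prop) : Prop :=
  exists D : dfa A, forall w, daccept D w <-> K w.

(* Words over the one-letter alphabet {a} are a^m, encoded by m : nat
   (the word of length m over the alphabet unit). *)
Definition unary_regular (L : pred nat) : Prop :=
  regular_lang (fun w : seq unit => L (size w)).

(* Convolution conv(a^m, a^n) over {a,$}^2; letter true = a, false = $. *)
Definition conv (m n : nat) : seq (bool * bool) :=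
  mkseq (fun i => (i < m, i < n)) (maxn m n).

Definition unary_regular_rel (R : nat -> nat -> Prop) : Prop :=
  regular_lang (fun w => exists m n, w = conv m n /\ R m n).

Definition unary_FA_presentable (X : Type) (rho : X -> X -> Prop) : Prop :=
  exists (L : pred nat) (phi : {m : nat | L m} -> X),
    unary_regular L /\
    (forall x : X, exists u, phi u = x) /\
    unary_regular_rel (fun m n => exists (hm : L m) (hn : L n),
                          phi (exist _ m hm) = phi (exist _ n hn)) /\
    unary_regular_rel (fun m n => exists (hm : L m) (hn : L n),
                          rho (phi (exist _ m hm)) (phi (exist _ n hn))).

Definition rel_iso (X Y : Type) (rX : X -> X -> Prop) (rY : Y -> Y -> Prop) :=
  exists f : X -> Y, bijective f /\ forall x y, rX x y <-> rY (f x) (f y).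

(* Seeds: p k i is p^(k)_(i+1) for k < n and i : 'I_5 (0-based index i
   stands for the paper's index i+1). *)
Definition in_seed (Q : finType) (n : nat) (p : 'I_n -> 'I_5 -> Q) (q : Q) : bool :=
  [exists k, [exists i, p k i == q]].

Definition seed_const (Q : finType) (rho : rel Q) (n : nat)
    (p : 'I_n -> 'I_5 -> Q) (cnd : nat -> nat -> bool) : Prop :=
  forall (k l : 'I_n) (i j i' j' : 'I_5),
    cnd i j -> cnd i' j' -> rho (p k i) (p l j) = rho (p k i') (p l j').

Definition FA_foundational (Q : finType) (rho : rel Q) (n : nat)
    (p : 'I_n -> 'I_5 -> Q) : Prop :=
  (forall k l i j, p k i = p l j -> k = l /\ i = j) /\
  seed_const rho p (fun i j => j == i) /\
  seed_const rho p (fun i j => j == i.+1) /\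
  seed_const rho p (fun i j => i == j.+1) /\
  seed_const rho p (fun i j => i.+2 <= j) /\
  seed_const rho p (fun i j => j.+2 <= i) /\
  (* conditions (6),(7): indices 2..5 (0-based 1..4) *)
  (forall (k : 'I_n) (q : Q) (i i' : 'I_5), ~~ in_seed p q ->
      0 < i -> 0 < i' ->
      rho q (p k i) = rho q (p k i') /\ rho (p k i) q = rho (p k i') q).

(* Elements: inl q for q in Q', inr (k, i) for p^(k)_(i+1), i : nat. *)
Definition prop_type (Q : finType) (n : nat) (p : 'I_n -> 'I_5 -> Q) : Type :=
  ({q : Q | ~~ in_seed p q} + ('I_n * nat))%type.

Definition s1 : 'I_5 := inord 0.
Definition s2 : 'I_5 := inord 1.
Definition s3 : 'I_5 := inord 2.

Definition prop_rel (Q : finType) (rho : rel Q) (n : nat) (p : 'I_n -> 'I_5 -> Q)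
    (x y : prop_type p) : Prop :=
  match x, y with
  | inl q, inl q' => rho (sval q) (sval q')
  | inr (k, i), inr (l, j) =>
      (j = i /\ rho (p k s1) (p l s1)) \/
      (j = i.+1 /\ rho (p k s1) (p l s2)) \/
      (i = j.+1 /\ rho (p k s2) (p l s1)) \/
      (i.+2 <= j /\ rho (p k s1) (p l s3)) \/
      (j.+2 <= i /\ rho (p k s3) (p l s1))
  | inl q, inr (k, i) =>
      if i == 0 then rho (sval q) (p k s1) else rho (sval q) (p k s2)
  | inr (k, i), inl q =>
      if i == 0 then rho (p k s1) (sval q) else rho (p k s2) (sval q)
  end.

(* Main.v *)
Require Import Defs.
From mathcomp Require Import all_boot zify.
From Stdlib Require Import ClassicalEpsilon.
Set Implicit Arguments. Unset Strict Implicit. Unset Printing Implicit Defensive.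


Lemma foldl_nseq (A S : Type) (f : S -> A -> S) s n c :
  foldl f s (nseq n c) = iter n (fun s => f s c) s.
Proof. by elim: n s => [|n IH] s //=; rewrite IH -iterSr. Qed.

Lemma map_constx (T : eqType) (U : Type) (c : U) (f : T -> U) (s : seq T) :
  (forall i, i \in s -> f i = c) -> map f s = nseq (size s) c.
Proof. elim: s => //= x s IH h; rewrite h ?mem_head // IH // => i hi; apply: h; by rewrite inE hi orbT. Qed.

Lemma conv_split m n : conv m n =
  nseq (minn m n) (true,true) ++ nseq (n - m) (false,true) ++ nseq (m - n) (true,false).
Proof.
rewrite /conv /mkseq.
case: (leqP m n) => hmn.
  have -> : iota 0 n = iota 0 (m + (n - m)) by congr iota; lia.
  have -> : m - n = 0 by lia.
  rewrite cats0 iotaD map_cat; congr (_ ++ _).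
  + rewrite (@map_constx _ _ (true,true)) ?size_iota // => i; rewrite mem_iota => /andP[_ h].
    by rewrite h (leq_trans h hmn).
  + rewrite (@map_constx _ _ (false,true)) ?size_iota // => i; rewrite mem_iota => /andP[h1 h2].
    have -> : (i < m) = false by lia.
    have -> : (i < n) = true by lia. done.
- have -> : iota 0 m = iota 0 (n + (m - n)) by congr iota; lia.
  have -> : n - m = 0 by lia.
  rewrite /= iotaD map_cat; congr (_ ++ _).
  + rewrite (@map_constx _ _ (true,true)) ?size_iota // => i; rewrite mem_iota => /andP[_ h].
    have -> : (i < m) = true by lia. by rewrite h.
  + rewrite (@map_constx _ _ (true,false)) ?size_iota // => i; rewrite mem_iota => /andP[h1 h2].
    have -> : (i < m) = true by lia.
    have -> : (i < n) = false by lia. done.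
Qed.

Lemma iter_period (S : finType) (g : S -> S) (s : S) M m q :
  #|S| <= M -> M <= m -> iter (m + q * M`!) g s = iter m g s.
Proof.
move=> hS hm.
pose f := fun i : 'I_(#|S|.+1) => iter i g s.
have : ~~ injectiveb f.
  apply/negP => /injectiveP inj; have := leq_card f inj; by rewrite card_ord ltnn.
case/injectivePn => i [j] hij hf.
have key : forall a b, a < b -> b <= #|S| -> iter a g s = iter b g s ->
   forall x, a <= x -> forall r, iter (x + r * (b - a)) g s = iter x g s.
  move=> a b hab hb he x hx r; elim: r => [|r IH]; first by rewrite addn0.
  have -> : x + r.+1 * (b - a) = (x - a + r * (b - a)) + b by rewrite mulSn; lia.
  rewrite iterD -he -iterD.
  have -> : x - a + r * (b - a) + a = x + r * (b - a) by lia.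
  exact: IH.
have main : forall a b, a < b -> b <= #|S| -> iter a g s = iter b g s ->
   iter (m + q * M`!) g s = iter m g s.
  move=> a b hab hb he.
  have /dvdnP [c hc] : (b - a) %| M`! by apply: dvdn_fact; lia.
  rewrite hc mulnA; apply: (key a b hab hb he); lia.
have hi := ltn_ord i; have hj := ltn_ord j.
case: (ltngtP i j) => h.
- by apply: (main i j) => //; lia.
- by apply: (main j i) => //; lia.
- by move: hij; rewrite (val_inj h) eqxx.
Qed.


Definition shift_inv T P (G : nat -> nat -> bool) :=
 (forall x y, T <= x -> T <= y -> G (x+P) (y+P) = G x y) /\
 (forall x y, x + T <= y -> G x (y+P) = G x y) /\
 (forall x y, y + T <= x -> G (x+P) y = G x y).

Definition up_per T P (L : nat -> bool) := forall x, T <= x -> L (x + P) = L x.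

Lemma unit_seq (w : seq unit) : w = nseq (size w) tt.
Proof. by elim: w => [|[] w IH] //=; rewrite -IH. Qed.

Lemma dfa_unary_per (D : dfa unit) M :
  #|dstate D| <= M -> up_per M M`! (fun m => daccept D (nseq m tt)).
Proof.
move=> hM x hx; rewrite /daccept !foldl_nseq.
by rewrite -{1}(mul1n M`!) iter_period.
Qed.

Lemma daccept_conv (D : dfa (bool * bool)) m n :
  daccept D (conv m n) = @dfinal _ D
   (iter (m - n) (fun s => dtrans s (true,false))
     (iter (n - m) (fun s => dtrans s (false,true))
       (iter (minn m n) (fun s => dtrans s (true,true)) (dstart D)))).
Proof. by rewrite /daccept conv_split !foldl_cat !foldl_nseq. Qed.

Lemma dfa_shift (D : dfa (bool * bool)) M :
  #|dstate D| <= M -> shift_inv M M`! (fun m n => daccept D (conv m n)).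
Proof.
move=> hM; split; [|split] => x y h1 /=.
- move=> h2; rewrite !daccept_conv.
  have -> : x + M`! - (y + M`!) = x - y by lia.
  have -> : y + M`! - (x + M`!) = y - x by lia.
  have -> : minn (x + M`!) (y + M`!) = minn x y + 1 * M`! by lia.
  by rewrite iter_period //; lia.
- rewrite !daccept_conv.
  have -> : x - (y + M`!) = x - y by lia.
  have -> : y + M`! - x = y - x + 1 * M`! by lia.
  have -> : minn x (y + M`!) = minn x y by lia.
  by rewrite iter_period //; lia.
- rewrite !daccept_conv.
  have -> : y - (x + M`!) = y - x by lia.
  have -> : x + M`! - y = x - y + 1 * M`! by lia.
  have -> : minn (x + M`!) y = minn x y by lia.
  by rewrite iter_period //; lia.
Qed.


Section Cyc.
Variables (T P : nat).
Hypothesis P_gt0 : 0 < P.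

Definition cyc x := if x < T then x else T + (x - T) %% P.
Definition nxt c := if c.+1 < T + P then c.+1 else T.

Lemma cyc_lt x : cyc x < T + P.
Proof. rewrite /cyc; case: ifP => h; first lia. have := ltn_pmod (x - T) P_gt0; lia. Qed.

Lemma cyc_ge x : T <= x -> T <= cyc x.
Proof. rewrite /cyc; case: ifP => h; lia. Qed.

Lemma cyc_S x : cyc x.+1 = nxt (cyc x).
Proof.
rewrite /cyc /nxt; case: (ltnP x T) => h.
- case: (ltnP x.+1 T) => h'; first by have -> : x.+1 < T + P by lia.
  have -> : x.+1 = T by lia. by rewrite subnn mod0n addn0; case: ifP.
- have -> : (x.+1 < T) = false by lia.
  have -> : x.+1 - T = (x - T) + 1 by lia.
  rewrite -modnDml.
  have hr := ltn_pmod (x - T) P_gt0.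
  case: (ltnP ((x - T) %% P).+1 P) => h2.
  + rewrite addn1 modn_small // ifT; lia.
  + have -> : (x - T) %% P + 1 = P by lia.
    rewrite modnn addn0 ifF //; lia.
Qed.

Lemma cyc_dec x : T <= x -> x = cyc x + (x - T) %/ P * P.
Proof. move=> h; rewrite /cyc ifF; last lia. have := divn_eq (x - T) P; lia. Qed.

Lemma cyc_small x : x < T -> cyc x = x.
Proof. by rewrite /cyc => ->. Qed.

Lemma G_cyc1 G : shift_inv T P G -> forall m d, G m (m + d) = G (cyc m) (cyc m + cyc d).
Proof.
case=> [h1 [h2 h3]] m d.
have A : G m (m + d) = G (cyc m) (cyc m + d).
  case: (ltnP m T) => hm; first by rewrite (cyc_small hm).
  rewrite {1 2}(cyc_dec hm); have hc := cyc_ge hm.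
  elim: ((m - T) %/ P) => [|q IH]; first by rewrite !addn0.
  rewrite -IH -[RHS]h1; try lia. congr G; lia.
rewrite A; have hc : T <= cyc m + T by lia.
case: (ltnP d T) => hd; first by rewrite (cyc_small hd).
rewrite {1}(cyc_dec hd); have hcd := cyc_ge hd.
elim: ((d - T) %/ P) => [|q IH]; first by rewrite !addn0.
rewrite -IH -[RHS]h2; try lia. congr G; lia.
Qed.

Lemma G_cyc2 G : shift_inv T P G -> forall m d, G (m + d) m = G (cyc m + cyc d) (cyc m).
Proof.
case=> [h1 [h2 h3]] m d.
have A : G (m + d) m = G (cyc m + d) (cyc m).
  case: (ltnP m T) => hm; first by rewrite (cyc_small hm).
  rewrite {1 2}(cyc_dec hm); have hc := cyc_ge hm.
  elim: ((m - T) %/ P) => [|q IH]; first by rewrite !addn0.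
  rewrite -IH -[RHS]h1; try lia. congr G; lia.
rewrite A; have hc : T <= cyc m + T by lia.
case: (ltnP d T) => hd; first by rewrite (cyc_small hd).
rewrite {1}(cyc_dec hd); have hcd := cyc_ge hd.
elim: ((d - T) %/ P) => [|q IH]; first by rewrite !addn0.
rewrite -IH -[RHS]h3; try lia. congr G; lia.
Qed.

Lemma L_cyc (L : nat -> bool) : up_per T P L -> forall m, L m = L (cyc m).
Proof.
move=> h m; case: (ltnP m T) => hm; first by rewrite (cyc_small hm).
rewrite {1}(cyc_dec hm); have hc := cyc_ge hm.
elim: ((m - T) %/ P) => [|q IH]; first by rewrite !addn0.
rewrite -IH -[RHS]h; try lia. congr L; lia.
Qed.

Definition nxto (a : 'I_(T + P).+1) : 'I_(T + P).+1 := inord (nxt a).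

Lemma iter_nxto k : val (iter k nxto (inord 0)) = cyc k.
Proof.
have c0 : cyc 0 = 0 by rewrite /cyc; case: ifP => h //; rewrite sub0n mod0n; lia.
elim: k => [|k IH] /=; first by rewrite inordK // c0.
rewrite /nxto inordK; first by rewrite IH cyc_S.
rewrite /nxt; case: ifP; lia.
Qed.

Lemma unary_reg_per (L : pred nat) : up_per T P L -> unary_regular L.
Proof.
move=> h.
exists (@DFA unit 'I_(T + P).+1 (inord 0) (fun a => L a) (fun a _ => nxto a)) => w.
rewrite /daccept /= {1}(unit_seq w) foldl_nseq.
have -> : iter (size w) (fun s => nxto s) (inord 0) = iter (size w) nxto (inord 0) by [].
by rewrite iter_nxto -L_cyc.
Qed.

End Cyc.


Lemma rcons_nseq (A : Type) k (x : A) : rcons (nseq k x) x = nseq k.+1 x.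
Proof. by elim: k => //= k ->. Qed.

Section Bin.
Variables (T P : nat) (G : nat -> nat -> bool).
Hypothesis P_gt0 : 0 < P.
Hypothesis hG : shift_inv T P G.

Local Notation K := (T + P).
Local Notation ord := 'I_K.+1.
Definition bstate := option (bool * bool * ord * ord).
Local Notation tt2 := (true,true).
Local Notation nxto := (@nxto T P).

Definition bstep (s : bstate) (c : bool * bool) : bstate :=
  match s with None => None | Some (t, a, b) =>
   if (t == tt2) && (c == tt2) then Some (t, nxto a, b)
   else if [&& c != tt2, c != (false,false) & (t == tt2) || (t == c)] then Some (c, a, nxto b)
   else None end.

Definition bfinal (s : bstate) : bool :=
  match s with None => false | Some (t, a, b) =>
    if t == (true,false) then G (a + b) a else G a (a + b) end.

Definition bstart : bstate := Some (tt2, inord 0, inord 0).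

Lemma iter_b1 k a b : iter k (fun s => bstep s tt2) (Some (tt2, a, b)) = Some (tt2, iter k nxto a, b).
Proof. by elim: k => //= k ->. Qed.

Lemma iter_b2 k c t a b : c != tt2 -> c != (false,false) -> (t == tt2) || (t == c) ->
  iter k.+1 (fun s => bstep s c) (Some (t, a, b)) = Some (c, a, iter k.+1 nxto b).
Proof.
move=> h1 h2 h3; elim: k => [|k IH].
  by move: h1 h2 h3; case: c => [[] []]; case: t => [[] []].
rewrite iterS IH /= /bstep; clear IH; by move: h1 h2 h3; case: c => [[] []]; case: t => [[] []].
Qed.

Lemma val_iter_nxto k : val (iter k nxto (inord 0 : ord)) = cyc T P k.
Proof. exact: iter_nxto. Qed.

Lemma cyc0 : cyc T P 0 = 0.
Proof. by rewrite /cyc; case: ifP => h //; rewrite sub0n mod0n; lia. Qed.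

Lemma iter0x (A : Type) (f : A -> A) x : iter 0 f x = x.
Proof. by []. Qed.

Lemma bfinalE t a b : bfinal (Some (t, a, b)) =
  if t == (true,false) then G (a + b) a else G a (a + b).
Proof. by []. Qed.

Lemma bconv m n : bfinal (foldl bstep bstart (conv m n)) = G m n.
Proof.
rewrite conv_split !foldl_cat !foldl_nseq /bstart iter_b1.
case: (leqP m n) => hmn.
- have -> : m - n = 0 by lia.
  case hd: (n - m) => [|d].
  + have -> : n = m + 0 by lia.
    by rewrite !iter0x bfinalE /= val_iter_nxto inordK // addn0 (G_cyc1 P_gt0 hG m 0) cyc0 addn0.
  + rewrite iter0x iter_b2 // bfinalE !val_iter_nxto -(G_cyc1 P_gt0 hG) /=.
    by have -> : n = m + d.+1 by lia.
- have -> : n - m = 0 by lia.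
  case hd: (m - n) => [|d]; first lia.
  rewrite iter0x iter_b2 // bfinalE !val_iter_nxto -(G_cyc2 P_gt0 hG) /=.
  by have -> : m = n + d.+1 by lia.
Qed.

Lemma binv w t a b : foldl bstep bstart w = Some (t, a, b) ->
  (t = tt2 /\ exists k, w = nseq k tt2) \/
  ((t = (false,true) \/ t = (true,false)) /\ exists k j, w = nseq k tt2 ++ nseq j.+1 t).
Proof.
elim/last_ind: w t a b => [|w c IH] t a b.
- by case=> <- _ _; left; split => //; exists 0.
rewrite foldl_rcons; case E: (foldl bstep bstart w) => [[[t' a'] b']|] //=.
case: (IH _ _ _ E) => [[-> [k ->]] | [ht' [k [j ->]]]].
- case: ifP => [/andP[_ /eqP ->]|_].
  + by case=> <- _ _; left; split => //; exists k.+1; rewrite rcons_nseq.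
  case: ifP => // /and3P[h1 h2 h3] [<- _ _]; right; split.
  + move: h1 h2; clear; case: c => [[] []] //= _ _; by [left|right].
  + by exists k, 0; rewrite -cats1.
- case: ifP => [/andP[/eqP ht _]|_]; first by case: ht' ht => -> .
  case: ifP => // /and3P[h1 h2 /orP[/eqP ht|/eqP ht]] [<- _ _]; first by case: ht' ht => ->.
  right; split; first by rewrite -ht.
  by exists k, j.+1; rewrite -ht rcons_cat rcons_nseq.
Qed.

Lemma binv_conv w : bfinal (foldl bstep bstart w) -> exists m n, w = conv m n.
Proof.
case E: (foldl bstep bstart w) => [[[t a] b]|] // _.
case: (binv E) => [[_ [k ->]] | [[->|->] [k [j ->]]]].
- by exists k, k; rewrite conv_split minnn subnn /= cats0.
- exists k, (k + j.+1); rewrite conv_split.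
  have -> : minn k (k + j.+1) = k by lia.
  have -> : k - (k + j.+1) = 0 by lia.
  have -> : k + j.+1 - k = j.+1 by lia.
  by rewrite [nseq 0 _]/= cats0.
- exists (k + j.+1), k; rewrite conv_split.
  have -> : minn (k + j.+1) k = k by lia.
  have -> : k - (k + j.+1) = 0 by lia.
  by have -> : k + j.+1 - k = j.+1 by lia.
Qed.

Lemma bin_regular : unary_regular_rel (fun m n => G m n).
Proof.
exists (@DFA (bool * bool) (option (bool * bool * ord * ord)) bstart bfinal bstep) => w.
rewrite /daccept /=; split.
- move=> h; have [m [n ew]] := binv_conv h; exists m, n; split => //.
  by rewrite -bconv -ew.
- by case=> m [n [-> h]]; rewrite bconv.
Qed.

End Bin.


Lemma ch_inj P i j a b : a < P -> b < P -> P * i + a = P * j + b -> i = j /\ a = b.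
Proof.
move=> ha hb e.
have hij : i = j.
  apply/eqP; rewrite eqn_leq; apply/andP; split; rewrite leqNgt; apply/negP => h.
  - have : P * j.+1 <= P * i by rewrite leq_mul2l h orbT.
    rewrite mulnS; lia.
  - have : P * i.+1 <= P * j by rewrite leq_mul2l h orbT.
    rewrite mulnS; lia.
by subst; split => //; lia.
Qed.

Lemma disj5 (i j : nat) (A00 A01 A10 A02 A20 : bool) :
  ((j = i /\ A00) \/ (j = i.+1 /\ A01) \/ (i = j.+1 /\ A10) \/ (i.+2 <= j /\ A02) \/ (j.+2 <= i /\ A20))
  <-> (if j == i then A00 else if j == i.+1 then A01 else if i == j.+1 then A10
       else if i.+2 <= j then A02 else A20).
Proof.
split.
- case=> [[e h]|[[e h]|[[e h]|[[e h]|[e h]]]]]; repeat case: ifP => ?; try done; lia.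
- repeat case: ifP => ?; move=> h.
  + by left; split => //; lia.
  + by right; left; split => //; lia.
  + by right; right; left; split => //; lia.
  + by right; right; right; left; split => //; lia.
  + by right; right; right; right; split => //; lia.
Qed.

Lemma s1v : (s1 : nat) = 0. Proof. by rewrite /s1 inordK. Qed.
Lemma s2v : (s2 : nat) = 1. Proof. by rewrite /s2 inordK. Qed.
Lemma s3v : (s3 : nat) = 2. Proof. by rewrite /s3 inordK. Qed.

Definition Vf (A00 A01 A10 A02 A20 : bool) (i j : nat) :=
  if j == i then A00 else if j == i.+1 then A01 else if i == j.+1 then A10
       else if i.+2 <= j then A02 else A20.

Lemma Vf0 A00 A01 A10 A02 A20 i j : j == i -> Vf A00 A01 A10 A02 A20 i j = A00.
Proof. by rewrite /Vf => ->. Qed.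
Lemma Vf1 A00 A01 A10 A02 A20 i j : j == i.+1 -> Vf A00 A01 A10 A02 A20 i j = A01.
Proof. rewrite /Vf => h; repeat case: ifP => ?; try done; lia. Qed.
Lemma Vf2 A00 A01 A10 A02 A20 i j : i == j.+1 -> Vf A00 A01 A10 A02 A20 i j = A10.
Proof. rewrite /Vf => h; repeat case: ifP => ?; try done; lia. Qed.
Lemma Vf3 A00 A01 A10 A02 A20 i j : i.+2 <= j -> Vf A00 A01 A10 A02 A20 i j = A02.
Proof. rewrite /Vf => h; repeat case: ifP => ?; try done; lia. Qed.
Lemma Vf4 A00 A01 A10 A02 A20 i j : j.+2 <= i -> Vf A00 A01 A10 A02 A20 i j = A20.
Proof. rewrite /Vf => h; repeat case: ifP => ?; try done; lia. Qed.

Section Fwd.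
Variables (X : Type) (rho : X -> X -> Prop) (L : pred nat) (phi : {m : nat | L m} -> X).
Variables (T P : nat) (Eb Rb : nat -> nat -> bool).
Hypotheses (T_gt0 : 0 < T) (TP : T <= P) (hL : up_per T P L).
Hypotheses (hEs : shift_inv T P Eb) (hRs : shift_inv T P Rb).
Hypothesis hE : forall m n, Eb m n <-> exists (hm : L m) (hn : L n), phi (exist _ m hm) = phi (exist _ n hn).
Hypothesis hR : forall m n, Rb m n <-> exists (hm : L m) (hn : L n), rho (phi (exist _ m hm)) (phi (exist _ n hn)).
Hypothesis hsurj : forall x, exists u, phi u = x.

Definition elt m (h : L m) := phi (exist _ m h).
Arguments elt : clear implicits.

Lemma elt_irr m h1 h2 : elt m h1 = elt m h2.
Proof. by rewrite (bool_irrelevance h1 h2). Qed.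


Lemma Eb_L m n : Eb m n -> L m /\ L n.
Proof. by case/hE => hm [hn _]. Qed.

Lemma Eb_elt m n hm hn : Eb m n <-> elt m hm = elt n hn.
Proof.
split; first by case/hE => hm' [hn' e]; rewrite (elt_irr hm hm') (elt_irr hn hn').
by move=> e; apply/hE; exists hm, hn.
Qed.

Lemma Rb_elt m n hm hn : Rb m n <-> rho (elt m hm) (elt n hn).
Proof.
split; first by case/hR => hm' [hn' e]; rewrite (elt_irr hm hm') (elt_irr hn hn').
by move=> e; apply/hR; exists hm, hn.
Qed.

Lemma Eb_sym m n : Eb m n -> Eb n m.
Proof. by case/hE => hm [hn e]; apply/hE; exists hn, hm. Qed.

Lemma Eb_trans m n o : Eb m n -> Eb n o -> Eb m o.
Proof.
case/hE => hm [hn e1] /hE [hn' [ho e2]]; apply/hE; exists hm, ho.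
by rewrite e1 -e2 (bool_irrelevance hn hn').
Qed.

Definition B := 3 * P.
Definition rep m := [forall i : 'I_m, ~~ Eb i m].
Definition goodb m := L m && rep m.

Lemma repP m : reflect (forall i, i < m -> ~~ Eb i m) (rep m).
Proof.
apply: (iffP forallP) => h i.
- by move=> hi; exact: (h (Ordinal hi)).
- exact: h.
Qed.

Lemma good_per y : B <= y -> goodb (y + P) = goodb y.
Proof.
move=> hy; have hy3 : 3 * P <= y by []; rewrite /goodb hL; last lia.
congr (_ && _); case: hEs => [h1 [h2 h3]].
apply/idP/idP => /repP h; apply/repP => i hi; apply/negP => e.
- case: (leqP (i + T) y) => hiT.
  + have : i < y + P by lia.
    by move=> /h; rewrite (h2 _ _ hiT) e.
  + have : i + P < y + P by lia.
    by move=> /h; rewrite h1 ?e //; lia.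
- case: (leqP (i + T) y) => hiT.
  + have : i < y by lia.
    by move=> /h; rewrite -(h2 _ _ hiT) e.
  + have hiP : i = (i - P) + P by lia.
    have : i - P < y by lia.
    move=> /h; rewrite -h1; try lia.
    by rewrite -hiP e.
Qed.

Lemma good_chain i k : goodb (B + P * i + k) = goodb (B + k).
Proof.
elim: i => [|i IH]; first by rewrite muln0 addn0.
rewrite -IH -(@good_per (B + P * i + k)); last lia.
by congr goodb; rewrite mulnS; lia.
Qed.

Definition sq := [seq k <- iota 0 P | goodb (B + k)].
Definition nS := size sq.

Lemma sq_uniq : uniq sq.
Proof. by rewrite filter_uniq // iota_uniq. Qed.

Lemma sq_mem k : (k \in sq) = (k < P) && goodb (B + k).
Proof. by rewrite mem_filter mem_iota andbC. Qed.

Lemma nth_sq (kk : 'I_nS) : nth 0 sq kk < P /\ goodb (B + nth 0 sq kk).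
Proof. by have := mem_nth 0 (ltn_ord kk); rewrite sq_mem => /andP. Qed.

Definition ch (kk : 'I_nS) i := B + P * i + nth 0 sq kk.

Lemma good_ch kk i : goodb (ch kk i).
Proof. by rewrite /ch good_chain; case: (nth_sq kk). Qed.

Definition KQ := B + 5 * P.

Lemma ch_lt kk (i : 'I_5) : ch kk i < KQ.
Proof.
have [h _] := nth_sq kk; have hi := ltn_ord i.
have : P * i <= P * 4 by rewrite leq_mul2l; apply/orP; right; lia.
rewrite /ch /KQ; lia.
Qed.

Definition Qt : finType := {m : 'I_KQ | goodb m}.
Definition pQ kk (i : 'I_5) : Qt := exist _ (Ordinal (ch_lt kk i)) (good_ch kk i).
Definition qv (q : Qt) : nat := val (sval q).
Definition rhoQ : rel Qt := fun a b => Rb (qv a) (qv b).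

Lemma qv_inj : injective qv.
Proof. by move=> a b e; apply: val_inj; apply: val_inj. Qed.

Lemma qv_pQ kk i : qv (pQ kk i) = ch kk i.
Proof. by []. Qed.

Lemma ch_inj2 k l i j : ch k i = ch l j -> k = l /\ i = j.
Proof.
rewrite /ch => e; have [hk _] := nth_sq k; have [hl _] := nth_sq l.
have [-> e2] : i = j /\ nth 0 sq k = nth 0 sq l by apply: ch_inj hk hl _; lia.
split => //; apply: val_inj => /=; apply/eqP.
by rewrite -(nth_uniq 0 (ltn_ord k) (ltn_ord l) sq_uniq) e2.
Qed.

Lemma ch_ge k i : B <= ch k i.
Proof. rewrite /ch; lia. Qed.

Lemma decomp v : B <= v -> v = B + P * ((v - B) %/ P) + (v - B) %% P.
Proof. move=> h; have := divn_eq (v - B) P; rewrite (mulnC P); lia. Qed.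

Lemma P_gt0 : 0 < P.
Proof. lia. Qed.

Lemma ch_surj v : B <= v -> goodb v -> exists k i, ch k i = v.
Proof.
move=> hv g.
have hk : (v - B) %% P \in sq.
  rewrite sq_mem ltn_pmod ?P_gt0 //= -(good_chain ((v - B) %/ P)) -decomp //.
have hi : index ((v - B) %% P) sq < nS by rewrite /nS index_mem.
exists (Ordinal hi), ((v - B) %/ P).
by rewrite /ch /= nth_index // -decomp.
Qed.

Lemma in_seedP q : in_seed pQ q = (B <= qv q).
Proof.
apply/idP/idP.
- by case/existsP => k /existsP [i /eqP <-]; rewrite qv_pQ ch_ge.
- move=> h; have g : goodb (qv q) by exact: (valP q).
  have [k [i e]] := ch_surj h g.
  have hlt : qv q < KQ by exact: ltn_ord.
  have hi : i < 5.
    rewrite ltnNge; apply/negP => h5.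
    have : P * 5 <= P * i by rewrite leq_mul2l h5 orbT.
    move: hlt; rewrite -e /ch /KQ; lia.
  apply/existsP; exists k; apply/existsP; exists (Ordinal hi).
  by apply/eqP/qv_inj; rewrite qv_pQ.
Qed.

Lemma ch_S k i : ch k i.+1 = ch k i + P.
Proof. rewrite /ch mulnS; lia. Qed.

Lemma BT : T <= B.
Proof. rewrite /B; lia. Qed.

Lemma Rb_shift k l i j x : Rb (ch k (i + x)) (ch l (j + x)) = Rb (ch k i) (ch l j).
Proof.
case: hRs => [h1 _]; elim: x => [|x IH]; first by rewrite !addn0.
rewrite !addnS !ch_S h1 //; apply: leq_trans BT (ch_ge _ _).
Qed.

Lemma Rb_far1 k l d : Rb (ch k 0) (ch l (d + 2)) = Rb (ch k 0) (ch l 2).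
Proof.
case: hRs => [_ [h2 _]]; elim: d => [|d IH] //.
rewrite addSn ch_S h2 // /ch; have [hk _] := nth_sq k.
have : P * 2 <= P * (d + 2) by rewrite leq_mul2l; apply/orP; right; lia.
lia.
Qed.

Lemma Rb_far2 k l d : Rb (ch k (d + 2)) (ch l 0) = Rb (ch k 2) (ch l 0).
Proof.
case: hRs => [_ [_ h3]]; elim: d => [|d IH] //.
rewrite addSn ch_S h3 // /ch; have [hk _] := nth_sq l.
have : P * 2 <= P * (d + 2) by rewrite leq_mul2l; apply/orP; right; lia.
lia.
Qed.

Lemma chain_rel k l i j : Rb (ch k i) (ch l j) =
  if j == i then Rb (ch k 0) (ch l 0)
  else if j == i.+1 then Rb (ch k 0) (ch l 1)
  else if i == j.+1 then Rb (ch k 1) (ch l 0)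
  else if i.+2 <= j then Rb (ch k 0) (ch l 2)
  else Rb (ch k 2) (ch l 0).
Proof.
case: (leqP i j) => hij.
- have -> : j = (j - i) + i by lia.
  rewrite -{1}[i]add0n Rb_shift.
  case E: (j - i) => [|[|d]].
  + by rewrite add0n eqxx.
  + by rewrite add1n eqxx ifF //; lia.
  + rewrite ifF; last lia. rewrite ifF; last lia. rewrite ifF; last lia.
    rewrite ifT; last lia.
    by rewrite -(Rb_far1 k l d); congr (Rb _ (ch _ _)); lia.
- have -> : i = (i - j) + j by lia.
  have -> : ch l j = ch l (0 + j) by []. rewrite Rb_shift.
  case E: (i - j) => [|[|d]]; first lia.
  + rewrite ifF; last lia. rewrite ifF; last lia. by rewrite add1n eqxx.
  + rewrite ifF; last lia. rewrite ifF; last lia. rewrite ifF; last lia.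
    rewrite ifF; last lia.
    by rewrite -(Rb_far2 k l d); congr (Rb (ch _ _) _); lia.
Qed.

Lemma chain_relV k l i j : Rb (ch k i) (ch l j) =
  Vf (Rb (ch k 0) (ch l 0)) (Rb (ch k 0) (ch l 1)) (Rb (ch k 1) (ch l 0))
     (Rb (ch k 0) (ch l 2)) (Rb (ch k 2) (ch l 0)) i j.
Proof. exact: chain_rel. Qed.

Lemma Rb_qch q k i : qv q < B -> 1 <= i ->
  Rb (qv q) (ch k i) = Rb (qv q) (ch k 1) /\ Rb (ch k i) (qv q) = Rb (ch k 1) (qv q).
Proof.
case: hRs => [_ [h2 h3]] hq; elim: i => [|i IH] // hi.
case: (posnP i) => [-> //|hi0]; have [IH1 IH2] := IH hi0.
have hPi : P * 1 <= P * i by rewrite leq_mul2l hi0 orbT.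
rewrite ch_S h2 ?h3 ?IH1 ?IH2 //; rewrite /ch; lia.
Qed.

Lemma fa_found : FA_foundational rhoQ pQ.
Proof.
split; [|split; [|split; [|split; [|split; [|split]]]]].
- move=> k l i j e; have := congr1 qv e; rewrite !qv_pQ => /ch_inj2 [-> h].
  by split => //; apply: val_inj.
1-5: move=> k l i j i' j' c1 c2; rewrite /rhoQ !qv_pQ (chain_relV k l i j) (chain_relV k l i' j').
- by rewrite (Vf0 _ _ _ _ _ c1) (Vf0 _ _ _ _ _ c2).
- by rewrite (Vf1 _ _ _ _ _ c1) (Vf1 _ _ _ _ _ c2).
- by rewrite (Vf2 _ _ _ _ _ c1) (Vf2 _ _ _ _ _ c2).
- by rewrite (Vf3 _ _ _ _ _ c1) (Vf3 _ _ _ _ _ c2).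
- by rewrite (Vf4 _ _ _ _ _ c1) (Vf4 _ _ _ _ _ c2).
move=> k q i i' hq hi hi'; rewrite in_seedP -ltnNge in hq.
rewrite /rhoQ !qv_pQ.
have [a1 a2] := Rb_qch k hq hi; have [b1 b2] := Rb_qch k hq hi'.
by rewrite a1 a2 b1 b2.
Qed.

Definition num (a : prop_type pQ) : nat :=
  match a with inl q => qv (sval q) | inr (k, i) => ch k i end.

Lemma num_good a : goodb (num a).
Proof. by case: a => [q|[k i]] /=; [exact: (valP (sval q)) | exact: good_ch]. Qed.

Lemma num_L a : L (num a).
Proof. by have /andP[] := num_good a. Qed.

Definition gF a := elt (num a) (num_L a).

Lemma inl_lt (q : {q : Qt | ~~ in_seed pQ q}) : qv (sval q) < B.
Proof. by have := valP q; rewrite in_seedP -ltnNge. Qed.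

Lemma prop_rel_num a b : prop_rel rhoQ a b <-> Rb (num a) (num b).
Proof.
case: a => [q|[k i]]; case: b => [q'|[l j]] /=.
- by [].
- have hq := inl_lt q; rewrite /rhoQ !qv_pQ s1v s2v.
  case: (posnP j) => [->|hj] //=.
  by have [-> _] := Rb_qch l hq hj.
- have hq := inl_lt q'; rewrite /rhoQ !qv_pQ s1v s2v.
  case: (posnP i) => [->|hi] //=.
  by have [_ ->] := Rb_qch k hq hi.
- by rewrite /rhoQ !qv_pQ s1v s2v s3v (chain_relV k l i j); apply: disj5.
Qed.

Lemma good_uniq m n : goodb m -> goodb n -> Eb m n -> m = n.
Proof.
move=> /andP[_ rm] /andP[_ rn] e.
case: (ltngtP m n) => h //.
- by move/repP: rn => /(_ m h); rewrite e.
- by move/repP: rm => /(_ n h); rewrite (Eb_sym e).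
Qed.

Lemma num_inj : injective num.
Proof.
case=> [q|[k i]] [q'|[l j]] /= e.
- by congr inl; apply: val_inj; apply: qv_inj.
- by have := inl_lt q; rewrite e; have := ch_ge l j; lia.
- by have := inl_lt q'; rewrite -e; have := ch_ge k i; lia.
- by have [-> ->] := ch_inj2 e.
Qed.

Lemma gF_inj : injective gF.
Proof.
move=> a b e; apply: num_inj; apply: good_uniq; try exact: num_good.
by apply/(Eb_elt (num_L a) (num_L b)).
Qed.

Lemma num_surj r : goodb r -> exists a, num a = r.
Proof.
move=> g; case: (ltnP r B) => hr.
- have hK : r < KQ by rewrite /KQ; lia.
  pose q : Qt := exist _ (Ordinal hK) g.
  have hq : ~~ in_seed pQ q by rewrite in_seedP -ltnNge.
  by exists (inl (exist _ q hq)).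
- have [k [i e]] := ch_surj hr g.
  by exists (inr (k, i)).
Qed.

Lemma gF_surj x : exists a, gF a = x.
Proof.
have [[m0 hm0] hu] := hsurj x.
have ex : exists m, Eb m m0 by exists m0; apply/(Eb_elt hm0 hm0).
case: (ex_minnP ex) => r hr hmin.
have [hLr _] := Eb_L hr.
have g : goodb r.
  rewrite /goodb hLr /=; apply/repP => i hi; apply/negP => e.
  by have := hmin i (Eb_trans e hr); lia.
have [a ea] := num_surj g.
exists a; rewrite -hu /gF.
have -> : elt (num a) (num_L a) = elt r hLr by move: (num_L a); rewrite ea => h; apply: elt_irr.
by apply/(Eb_elt hLr hm0).
Qed.

Lemma forward_main : exists (Q : finType) (rhoQ : rel Q) (n : nat) (p : 'I_n -> 'I_5 -> Q),
    FA_foundational rhoQ p /\ rel_iso rho (@prop_rel Q rhoQ n p).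
Proof.
exists Qt, rhoQ, nS, pQ; split; first exact: fa_found.
pose f x := sval (constructive_indefinite_description _ (gF_surj x)).
have fK : forall x, gF (f x) = x by move=> x; exact: (svalP (constructive_indefinite_description _ (gF_surj x))).
exists f; split.
- exists gF => [x|a]; first exact: fK.
  by apply: gF_inj; rewrite fK.
- move=> x y; rewrite prop_rel_num (Rb_elt (num_L _) (num_L _)).
  by rewrite -/(gF _) -/(gF _) !fK.
Qed.

End Fwd.


Lemma false_any (A : Type) : false -> A.
Proof. by []. Qed.

Definition oget (A : Type) (o : option A) : isSome o -> A :=
  match o return isSome o -> A with Some a => fun _ => a | None => @false_any A end.

Lemma ogetE (A : Type) (o : option A) (h : isSome o) a : o = Some a -> oget h = a.
Proof. by case: o h => // b h [->]. Qed.

Lemma regular_ext (A : Type) (K1 K2 : seq A -> Prop) :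
  (forall w, K1 w <-> K2 w) -> regular_lang K1 -> regular_lang K2.
Proof. move=> h [D hD]; exists D => w; rewrite hD; exact: h. Qed.

Lemma rel_ext (R1 R2 : nat -> nat -> Prop) :
  (forall m n, R1 m n <-> R2 m n) -> unary_regular_rel R1 -> unary_regular_rel R2.
Proof.
move=> h; apply: regular_ext => w; split; case=> m [k [e r]]; exists m, k; split => //; exact/h.
Qed.

Lemma Vf_S A00 A01 A10 A02 A20 i j :
  Vf A00 A01 A10 A02 A20 i.+1 j.+1 = Vf A00 A01 A10 A02 A20 i j.
Proof. by []. Qed.

Section Bwd.
Variables (Q : finType) (rhoQ : rel Q) (n : nat) (p : 'I_n -> 'I_5 -> Q).
Local Notation Y := (prop_type p).

Definition N0 := #|Q|.

Definition dec (m : nat) : option Y :=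
  if m < N0 then obind (fun o : 'I_N0 => omap (@inl _ ('I_n * nat)) (insub (enum_val o) : option {q : Q | ~~ in_seed p q})) (insub m)
  else omap (fun k => inr (k, (m - N0) %/ n)) (insub ((m - N0) %% n) : option 'I_n).

Definition enc (y : Y) : nat :=
  match y with inl q => enum_rank (sval q) | inr (k, i) => N0 + n * i + k end.

Lemma decK y : dec (enc y) = Some y.
Proof.
case: y => [q|[k i]] /=.
- rewrite /dec ifT; last exact: ltn_ord.
  by rewrite valK /= enum_rankK valK.
- have hk := ltn_ord k.
  rewrite /dec ifF; last lia.
  have -> : N0 + n * i + k - N0 = i * n + k by lia.
  rewrite modnMDl modn_small // divnMDl; last lia.
  by rewrite divn_small // addn0 valK.
Qed.

Lemma dec_enc m y : dec m = Some y -> enc y = m.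
Proof.
rewrite /dec; case: ifP => hm.
- case: insubP => [o _ <-|] //= ; case: insubP => [q0 _ e|] //= [<-] /=.
  by rewrite e enum_valK.
- case: insubP => [k hk ek|] //= [<-] /=.
  rewrite ek; have := divn_eq (m - N0) n; rewrite (mulnC _ n); lia.
Qed.

Lemma dec_inj m m' y : dec m = Some y -> dec m' = Some y -> m = m'.
Proof. by move=> /dec_enc <- /dec_enc <-. Qed.

Lemma dec_big m : N0 <= m -> 0 < n -> exists k i, m = enc (inr (k, i)).
Proof.
move=> hm hn; exists (Ordinal (ltn_pmod (m - N0) hn)), ((m - N0) %/ n) => /=.
have := divn_eq (m - N0) n; rewrite (mulnC _ n); lia.
Qed.

Lemma dec_none m : N0 <= m -> n = 0 -> dec m = None.
Proof.
move=> hm hn; rewrite /dec ifF; last lia.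
by case: insubP => // k hk _; exfalso; move: hk; rewrite hn.
Qed.

Definition Lp : pred nat := fun m => isSome (dec m).
Definition Pp := maxn n 1.
Definition Tp := N0 + 3 * Pp.

Lemma Pp_gt0 : 0 < Pp.
Proof. rewrite /Pp; lia. Qed.

Lemma Pp_n : 0 < n -> Pp = n.
Proof. rewrite /Pp; lia. Qed.

Lemma Lp_big m : N0 <= m -> Lp m = (0 < n).
Proof.
move=> hm; case: (posnP n) => hn.
- by rewrite /Lp dec_none // hn.
- by have [k [i ->]] := dec_big hm hn; rewrite /Lp decK.
Qed.

Lemma Lp_per : up_per Tp Pp Lp.
Proof. move=> x hx; rewrite !Lp_big //; rewrite /Tp in hx; lia. Qed.

Definition Geq m m' := (m == m') && Lp m.

Lemma Geq_shift : shift_inv Tp Pp Geq.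
Proof.
have hP := Pp_gt0.
split; [|split] => x y h1 /=.
- move=> h2; rewrite /Geq eqn_add2r Lp_per //.
- rewrite /Geq; have -> : (x == y + Pp) = false by rewrite /Tp in h1; lia.
  by have -> : (x == y) = false by rewrite /Tp in h1; lia.
- rewrite /Geq; have -> : (x + Pp == y) = false by rewrite /Tp in h1; lia.
  by have -> : (x == y) = false by rewrite /Tp in h1; lia.
Qed.

Definition prop_relb (x y : Y) : bool :=
  match x, y with
  | inl q, inl q' => rhoQ (sval q) (sval q')
  | inr (k, i), inr (l, j) =>
      Vf (rhoQ (p k s1) (p l s1)) (rhoQ (p k s1) (p l s2)) (rhoQ (p k s2) (p l s1))
         (rhoQ (p k s1) (p l s3)) (rhoQ (p k s3) (p l s1)) i j
  | inl q, inr (k, i) => if i == 0 then rhoQ (sval q) (p k s1) else rhoQ (sval q) (p k s2)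
  | inr (k, i), inl q => if i == 0 then rhoQ (p k s1) (sval q) else rhoQ (p k s2) (sval q)
  end.

Lemma prop_relP x y : prop_rel rhoQ x y <-> prop_relb x y.
Proof.
case: x => [q|[k i]]; case: y => [q'|[l j]] //=.
- exact: disj5.
Qed.

Definition Gr m m' :=
  match dec m, dec m' with Some y, Some y' => prop_relb y y' | _, _ => false end.

Lemma Gr_enc a b : Gr (enc a) (enc b) = prop_relb a b.
Proof. by rewrite /Gr !decK. Qed.

Lemma Gr_none_l m m' : dec m = None -> Gr m m' = false.
Proof. by rewrite /Gr => ->. Qed.

Lemma Gr_none_r m m' : dec m' = None -> Gr m m' = false.
Proof. by rewrite /Gr => ->; case: (dec m). Qed.

Lemma enc_S k i : enc (inr (k, i)) + n = enc (inr (k, i.+1)).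
Proof. rewrite /= mulnS; lia. Qed.

Lemma far_le i j k l : enc (inr (k, i)) + Tp <= enc (inr (l, j)) -> 0 < n -> i.+2 <= j.
Proof.
move=> /= h hn; rewrite /Tp (Pp_n hn) in h.
have hl := ltn_ord l.
have : n * (i + 3) < n * (j + 1) by lia.
rewrite ltn_mul2l; lia.
Qed.

Lemma far_pos x j l : x + Tp <= enc (inr (l, j)) -> 0 < n -> 0 < j.
Proof.
move=> /= h hn; rewrite /Tp (Pp_n hn) in h.
have hl := ltn_ord l; case: j h => // h; rewrite muln0 in h; lia.
Qed.

Lemma Gr_shift : shift_inv Tp Pp Gr.
Proof.
split; [|split] => x y h1 /=.
- move=> h2; case: (posnP n) => hn.
  + rewrite !Gr_none_l //; apply: dec_none => //; rewrite /Tp in h1; lia.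
  + have [k [i ->]] := dec_big (leq_trans (leq_addr _ _) h1) hn.
    have [l [j ->]] := dec_big (leq_trans (leq_addr _ _) h2) hn.
    by rewrite (Pp_n hn) !enc_S !Gr_enc /= Vf_S.
- case: (posnP n) => hn.
  + rewrite !Gr_none_r //; apply: dec_none => //; rewrite /Tp in h1; lia.
  have hy : N0 <= y by rewrite /Tp in h1; lia.
  have [l [j ey]] := dec_big hy hn.
  rewrite ey in h1 *; rewrite (Pp_n hn) enc_S.
  case ex: (dec x) => [a|]; last by rewrite !Gr_none_l.
  rewrite -(dec_enc ex) in h1 *; rewrite !Gr_enc.
  case: a h1 {ex} => [q|[k i]] h1 /=.
  + by have := far_pos h1 hn; case: j {ey h1}.
  + have hij := far_le h1 hn.
    rewrite (Vf3 _ _ _ _ _ hij) (Vf3 _ _ _ _ _ (leqW hij)) //.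
- case: (posnP n) => hn.
  + rewrite !Gr_none_l //; apply: dec_none => //; rewrite /Tp in h1; lia.
  have hx : N0 <= x by rewrite /Tp in h1; lia.
  have [k [i ex]] := dec_big hx hn.
  rewrite ex in h1 *; rewrite (Pp_n hn) enc_S.
  case ey: (dec y) => [a|]; last by rewrite !Gr_none_r.
  rewrite -(dec_enc ey) in h1 *; rewrite !Gr_enc.
  case: a h1 {ey} => [q|[l j]] h1 /=.
  + by have := far_pos h1 hn; case: i {ex h1}.
  + have hij := far_le h1 hn.
    rewrite (Vf4 _ _ _ _ _ hij) (Vf4 _ _ _ _ _ (leqW hij)) //.
Qed.

End Bwd.

Section Bwd2.
Variables (Q : finType) (rhoQ : rel Q) (n : nat) (p : 'I_n -> 'I_5 -> Q).
Variables (X : Type) (rho : X -> X -> Prop) (f : X -> prop_type p) (g : prop_type p -> X).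
Hypotheses (fK : cancel f g) (gK : cancel g f).
Hypothesis hf : forall x y, rho x y <-> prop_rel rhoQ (f x) (f y).

Definition phiB (u : {m : nat | Lp p m}) : X := g (oget (valP u)).

Lemma phiB_eq m (h : Lp p m) y : dec p m = Some y -> phiB (exist _ m h) = g y.
Proof. by move=> e; rewrite /phiB (ogetE _ e). Qed.

Lemma backward_main : unary_FA_presentable rho.
Proof.
exists (Lp p), phiB; split; [|split; [|split]].
- exact: (unary_reg_per (Pp_gt0 n) (@Lp_per _ _ p)).
- move=> x; have h : Lp p (enc (f x)) by rewrite /Lp decK.
  by exists (exist (fun m => Lp p m) _ h); rewrite (phiB_eq h (decK (f x))) fK.
- apply: (rel_ext _ (bin_regular (Pp_gt0 n) (@Geq_shift _ _ p))) => m m'; split.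
  + case/andP => /eqP <- hm; by exists hm, hm.
  + case=> hm [hm' e]; rewrite /Geq hm andbT.
    case E: (dec p m) => [y|]; last by have := hm; rewrite /Lp E.
    case E': (dec p m') => [y'|]; last by have := hm'; rewrite /Lp E'.
    rewrite (phiB_eq _ E) (phiB_eq _ E') in e.
    have ey := can_inj gK e; subst y'.
    by rewrite (dec_inj E E').
- apply: (rel_ext _ (bin_regular (Pp_gt0 n) (Gr_shift rhoQ p))) => m m'; split.
  + rewrite /Gr; case E: (dec p m) => [y|] //; case E': (dec p m') => [y'|] // hr.
    have hm : Lp p m by rewrite /Lp E.
    have hm' : Lp p m' by rewrite /Lp E'.
    exists hm, hm'; rewrite (phiB_eq _ E) (phiB_eq _ E') hf !gK.
    by apply/prop_relP.
  + case=> hm [hm' r]; rewrite /Gr.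
    case E: (dec p m) => [y|]; last by have := hm; rewrite /Lp E.
    case E': (dec p m') => [y'|]; last by have := hm'; rewrite /Lp E'.
    rewrite (phiB_eq _ E) (phiB_eq _ E') hf !gK in r.
    by apply/prop_relP.
Qed.

End Bwd2.


Lemma conv_count1 m n : count (fun c : bool * bool => c.1) (conv m n) = m.
Proof. rewrite conv_split !count_cat !count_nseq /=; lia. Qed.
Lemma conv_count2 m n : count (fun c : bool * bool => c.2) (conv m n) = n.
Proof. rewrite conv_split !count_cat !count_nseq /=; lia. Qed.

Lemma conv_inj m n m' n' : conv m n = conv m' n' -> m = m' /\ n = n'.
Proof.
move=> e; split.
- by rewrite -(conv_count1 m n) e conv_count1.
- by rewrite -(conv_count2 m n) e conv_count2.
Qed.

Lemma dfa_pos A (D : dfa A) : 0 < #|dstate D|.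
Proof. by apply/card_gt0P; exists (dstart D). Qed.

Theorem theorem5p1 (X : Type) (rho : X -> X -> Prop) :
  unary_FA_presentable rho <->
  exists (Q : finType) (rhoQ : rel Q) (n : nat) (p : 'I_n -> 'I_5 -> Q),
    FA_foundational rhoQ p /\ rel_iso rho (@prop_rel Q rhoQ n p).
Proof.
split.
- case=> L [phi [[DL hDL] [hsurj [[DE hDE] [DR hDR]]]]].
  pose M := #|dstate DL| + #|dstate DE| + #|dstate DR|.
  have hLe : forall m, L m = daccept DL (nseq m tt).
    by move=> m; apply/idP/idP => h; [apply/hDL; rewrite size_nseq | move/hDL: h; rewrite size_nseq].
  have relspec : forall (D : dfa (bool * bool)) (R : nat -> nat -> Prop),
      (forall w, daccept D w <-> exists m n, w = conv m n /\ R m n) ->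
      forall m n, daccept D (conv m n) <-> R m n.
    move=> D R hD m n; rewrite hD; split; last by move=> r; exists m, n.
    by case=> m' [n' [/conv_inj [-> ->] r]].
  apply: (@forward_main X rho L phi M M`! (fun m n => daccept DE (conv m n))
            (fun m n => daccept DR (conv m n))).
  + have := dfa_pos DL; rewrite /M; lia.
  + exact: fact_geq.
  + move=> x hx; rewrite !hLe; apply: dfa_unary_per hx; rewrite /M; lia.
  + apply: dfa_shift; rewrite /M; lia.
  + apply: dfa_shift; rewrite /M; lia.
  + exact: relspec.
  + exact: relspec.
  + exact: hsurj.
- case=> Q [rhoQ [n [p [_ [f [[g fK gK] hf]]]]]].
  exact: (backward_main fK gK hf).
Qed.
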